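(* Let $\mathcal{K}_{w,F}$ be an oriented folded ribbon knot. At a fold with fold angle $0<\theta<\pi$, there are two intersection points between the ribbon's boundary and the knot diagram, and both contribute the same sign to the ribbon linking number, namely: left underfold $+1$; left overfold $-1$; right underfold $-1$; right overfold $+1$.
   Context: For a polygonal knot diagram $\mathcal{K}$ and width $w>0$, the folded ribbon knot $\mathcal{K}_{w,F}$ is a flat strip of width $w$ centred on $\mathcal{K}$ (boundary parallel to and at distance $w/2$ from each edge), folded at each vertex along a fold line through the vertex perpendicular to the bisector of the angle between the adjacent edges; formally a piecewise-linear immersion of an annulus or Möbius band whose only singularities are pairwise disjoint fold lines, with consistent crossing information. The fold angle at a vertex is the angle in $[0,\pi]$ between the two adjacent edges. With $\mathcal{K}$ oriented, at vertex $v_i$ with incoming edge $e_{i-1}$ and outgoing edge $e_i$, the fold is a left (resp. right) fold if $e_i$ turns left (resp. right) of $e_{i-1}$; it is an underfold if the layer of ribbon along $e_i$ lies beneath the layer along $e_{i-1}$ in the fold, an overfold otherwise. The boundary of the ribbon is oriented parallel to $\mathcal{K}$, crossings between the knot diagram and the boundary are signed $\pm1$ by the right-hand rule, and the ribbon linking number is the linking number of the knot diagram with one boundary component of the ribbon (one half the sum of the crossing signs with that component). *)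

(* Defs.v *)
From HB Require Import structures.
From mathcomp Require Import all_boot all_order all_algebra.
From mathcomp Require Import all_classical all_reals all_analysis.
Set Implicit Arguments. Unset Strict Implicit. Unset Printing Implicit Defensive.
Import Order.TTheory GRing.Theory Num.Theory.
Local Open Scope ring_scope.
Local Open Scope classical_set_scope.

Section FoldGeometry.
Variable R : realType.
Local Notation pt := (R * R)%type.

Definition addp (p q : pt) : pt := (p.1 + q.1, p.2 + q.2).
Definition subp (p q : pt) : pt := (p.1 - q.1, p.2 - q.2).
Definition oppp (p : pt) : pt := (- p.1, - p.2).
Definition scalep (t : R) (p : pt) : pt := (t * p.1, t * p.2).
Definition dotp (p q : pt) : R := p.1 * q.1 + p.2 * q.2.
Definition crossp (p q : pt) : R := p.1 * q.2 - p.2 * q.1.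
Definition vnorm (p : pt) : R := Num.sqrt (dotp p p).

(* The fold at vertex v: incoming edge e_{i-1} has direction d1 (so the
   previous vertex lies in direction -d1 from v), outgoing edge e_i has
   direction d2.  The fold angle is the angle in [0,pi] between the two
   edges adjacent to v, i.e. between the vectors -d1 and d2 issued from v. *)
Definition fold_angle (d1 d2 : pt) : R :=
  acos (dotp (oppp d1) d2 / (vnorm d1 * vnorm d2)).

Definition left_fold (d1 d2 : pt) : bool := 0 < crossp d1 d2.

(* the two layers of ribbon meeting at the fold *)
Inductive layer := Lin (* along e_{i-1} *) | Lout (* along e_i *).

Definition ldir (d1 d2 : pt) (X : layer) : pt :=
  match X with Lin => d1 | Lout => d2 end.

Definition lnormal (d : pt) : pt := (- d.2 / vnorm d, d.1 / vnorm d).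

Definition bisector (d1 d2 : pt) : pt :=
  addp (scalep (vnorm d1)^-1 (oppp d1)) (scalep (vnorm d2)^-1 d2).

(* fold line: through v, perpendicular to the bisector; both layers lie on
   the side of the fold line containing the edges. *)
Definition fold_side (v d1 d2 : pt) : set pt :=
  [set p | 0 <= dotp (bisector d1 d2) (subp p v)].

Definition knot_piece (v d1 d2 : pt) (X : layer) : set pt :=
  match X with
  | Lin => [set p | exists2 t : R, 0 <= t & p = subp v (scalep t d1)]
  | Lout => [set p | exists2 t : R, 0 <= t & p = addp v (scalep t d2)]
  end.

Definition layer_region (v d1 d2 : pt) (w : R) (X : layer) : set pt :=
  [set p | `|dotp (lnormal (ldir d1 d2 X)) (subp p v)| <= w / 2]
  `&` fold_side v d1 d2.

(* It is oriented
   parallel to the knot, i.e. with direction ldir d1 d2 X. *)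
Definition boundary_piece (v d1 d2 : pt) (w : R) (X : layer) (s : bool) : set pt :=
  [set p | dotp (lnormal (ldir d1 d2 X)) (subp p v) = (if s then w / 2 else - (w / 2))]
  `&` fold_side v d1 d2.

Definition fold_intersections (v d1 d2 : pt) (w : R) : set pt :=
  [set p | exists X Y s, knot_piece v d1 d2 X p /\ boundary_piece v d1 d2 w Y s p].

(* underfold (under = true): the layer along e_i lies beneath the layer along
   e_{i-1}; so the top layer is Lin for an underfold, Lout for an overfold. *)
Definition top_layer (under : bool) : layer := if under then Lin else Lout.

Definition layer_eqb (X Y : layer) : bool :=
  match X, Y with Lin, Lin | Lout, Lout => true | _, _ => false end.

(* sign (right-hand rule) of the crossing of the knot strand lying on layer X
   with the boundary strand lying on layer Y: +1 iff, looking along the over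
   strand, the under strand passes from right to left, i.e.
   sg (over_direction x under_direction).  0 if there is no crossing (X = Y). *)
Definition crossing_sign (d1 d2 : pt) (under : bool) (X Y : layer) : R :=
  if layer_eqb X Y then 0
  else if layer_eqb (top_layer under) X
       then Num.sg (crossp (ldir d1 d2 X) (ldir d1 d2 Y))
       else Num.sg (crossp (ldir d1 d2 Y) (ldir d1 d2 X)).

Definition predicted_sign (d1 d2 : pt) (under : bool) : R :=
  if left_fold d1 d2 then (if under then 1 else -1)
  else (if under then -1 else 1).

End FoldGeometry.

(* Main.v *)
Require Import Defs.
From HB Require Import structures.
From mathcomp Require Import all_boot all_order all_algebra.
From mathcomp Require Import all_classical all_reals all_analysis.
From mathcomp Require Import ring lra.
Import Order.TTheory GRing.Theory Num.Theory.
Local Open Scope ring_scope.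
Local Open Scope classical_set_scope.

Section Aux.
Variable R : realType.
Implicit Types (v d p q : R * R) (t : R).

Lemma dd_gt0 {d} : d <> (0, 0) -> 0 < dotp d d.
Proof.
case: d => a b /= H; rewrite /dotp /=.
have [a0|a0|ea] := ltgtP a 0.
- nra.
- nra.
have [b0|b0|eb] := ltgtP b 0.
- nra.
- nra.
by exfalso; apply: H; rewrite ea eb.
Qed.

Lemma vnorm_gt0 {d} : d <> (0, 0) -> 0 < vnorm d.
Proof. by move=> H; rewrite /vnorm sqrtr_gt0 dd_gt0. Qed.

Lemma vnorm_sq d : vnorm d ^+ 2 = dotp d d.
Proof.
rewrite /vnorm sqr_sqrtr //; case: d => a b; rewrite /dotp /=; nra.
Qed.

Lemma lagrange d1 d2 :
  dotp d1 d2 ^+ 2 + crossp d1 d2 ^+ 2 = dotp d1 d1 * dotp d2 d2.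
Proof. case: d1 d2 => a b [c e]; rewrite /dotp /crossp /=; ring. Qed.

Lemma L1 v d1 d2 t :
  dotp (lnormal d2) (subp (subp v (scalep t d1)) v) = t * crossp d1 d2 / vnorm d2.
Proof.
case: v d1 d2 => x y [a b] [c e]; rewrite /dotp /lnormal /subp /scalep /crossp /=.
rewrite /vnorm /dotp /=; ring.
Qed.

Lemma L2 v d1 d2 t :
  dotp (lnormal d1) (subp (addp v (scalep t d2)) v) = t * crossp d1 d2 / vnorm d1.
Proof.
case: v d1 d2 => x y [a b] [c e]; rewrite /dotp /lnormal /subp /addp /scalep /crossp /=.
rewrite /vnorm /dotp /=; ring.
Qed.

Lemma L3 v d1 t :
  dotp (lnormal d1) (subp (subp v (scalep t d1)) v) = 0.
Proof.
case: v d1 => x y [a b]; rewrite /dotp /lnormal /subp /scalep /=.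
rewrite /vnorm /dotp /=; ring.
Qed.

Lemma L4 v d2 t :
  dotp (lnormal d2) (subp (addp v (scalep t d2)) v) = 0.
Proof.
case: v d2 => x y [a b]; rewrite /dotp /lnormal /subp /addp /scalep /=.
rewrite /vnorm /dotp /=; ring.
Qed.

Lemma cs {d1 d2} : d1 <> (0,0) -> d2 <> (0,0) -> dotp d1 d2 <= vnorm d1 * vnorm d2.
Proof.
move=> H1 H2.
have n1 := vnorm_gt0 H1; have n2 := vnorm_gt0 H2.
have s1 := vnorm_sq d1; have s2 := vnorm_sq d2; have lg := lagrange d1 d2.
have c2 : 0 <= crossp d1 d2 ^+ 2 by apply: sqr_ge0.
set p := dotp d1 d2 in lg *; set q := vnorm d1 * vnorm d2.
have hq : q ^+ 2 = dotp d1 d1 * dotp d2 d2 by rewrite exprMn s1 s2.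
have q0 : 0 <= q by rewrite /q; apply: mulr_ge0; apply: ltW.
rewrite leNgt; apply/negP => hpq.
have : q ^+ 2 < p ^+ 2 by nra.
nra.
Qed.

Lemma B1 v d1 d2 t :
  dotp (bisector d1 d2) (subp (subp v (scalep t d1)) v) =
  t * ((vnorm d1)^-1 * dotp d1 d1 - dotp d1 d2 / vnorm d2).
Proof.
case: v d1 d2 => x y [a b] [e f].
rewrite /dotp /bisector /addp /scalep /oppp /subp /=; ring.
Qed.

Lemma B2 v d1 d2 t :
  dotp (bisector d1 d2) (subp (addp v (scalep t d2)) v) =
  t * ((vnorm d2)^-1 * dotp d2 d2 - dotp d1 d2 / vnorm d1).
Proof.
case: v d1 d2 => x y [a b] [e f].
rewrite /dotp /bisector /addp /scalep /oppp /subp /=; ring.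
Qed.

Lemma L5 v d1 d2 t : d1 <> (0,0) -> d2 <> (0,0) -> 0 <= t ->
  fold_side v d1 d2 (subp v (scalep t d1)).
Proof.
move=> H1 H2 t0; rewrite /fold_side /= B1 -vnorm_sq expr2 mulKf ?gt_eqF ?vnorm_gt0 //.
have n1 := vnorm_gt0 H1; have n2 := vnorm_gt0 H2.
have c := cs H1 H2.
apply: mulr_ge0 => //.
rewrite subr_ge0 ler_pdivrMr //.
Qed.

Lemma L6 v d1 d2 t : d1 <> (0,0) -> d2 <> (0,0) -> 0 <= t ->
  fold_side v d1 d2 (addp v (scalep t d2)).
Proof.
move=> H1 H2 t0; rewrite /fold_side /= B2 -vnorm_sq expr2 mulKf ?gt_eqF ?vnorm_gt0 //.
have n1 := vnorm_gt0 H1; have n2 := vnorm_gt0 H2.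
have c := cs H1 H2.
apply: mulr_ge0 => //.
rewrite subr_ge0 ler_pdivrMr // mulrC; exact: c.
Qed.

Lemma cross_neq0 {d1 d2} : d1 <> (0,0) -> d2 <> (0,0) ->
  0 < fold_angle d1 d2 < pi -> crossp d1 d2 != 0.
Proof.
move=> H1 H2 /andP[a0 api]; apply/negP => /eqP c0.
have n1 := vnorm_gt0 H1; have n2 := vnorm_gt0 H2.
have lg := lagrange d1 d2; rewrite c0 expr0n /= addr0 -!vnorm_sq -exprMn in lg.
have q0 : vnorm d1 * vnorm d2 != 0 by rewrite mulf_neq0 // gt_eqF.
move: a0 api; rewrite /fold_angle /dotp /oppp /=.
have -> : - d1.1 * d2.1 + - d1.2 * d2.2 = - dotp d1 d2 by rewrite /dotp; ring.
move/eqP: lg; rewrite eqf_sqr => /orP[] /eqP ->.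
- by rewrite mulNr mulfV // acosN1 ltxx.
- by rewrite opprK mulfV // acos1 ltxx.
Qed.

Lemma normE (t c n w : R) (s : bool) : 0 <= t -> 0 < n -> 0 < w -> c != 0 ->
  t * c / n = (if s then w / 2 else - (w / 2)) -> t = w / 2 * n / `|c|.
Proof.
move=> t0 n0 w0 c0 E.
have : `|t * c / n| = w / 2.
  by rewrite E; case: (s); rewrite ?normrN gtr0_norm //; apply: divr_gt0.
rewrite !normrM normfV (ger0_norm t0) (gtr0_norm n0) => <-.
by field; rewrite ?normr_eq0 c0 gt_eqF.
Qed.

Lemma sgnE (t c n w : R) : 0 < n -> 0 < w -> c != 0 ->
  (w / 2 * n / `|c|) * c / n = (if 0 < c then w / 2 else - (w / 2)).
Proof.
move=> n0 w0 c0; have [cp|cn|ce] := ltgtP c 0.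
- by rewrite ltr0_norm //; field; rewrite c0 gt_eqF.
- by rewrite gtr0_norm //; field; rewrite c0 gt_eqF.
- by move: c0; rewrite ce eqxx.
Qed.

End Aux.
Arguments vnorm_gt0 {R d}.
Arguments cross_neq0 {R d1 d2}.
Arguments normE {R t c n w s}.
Arguments sgnE {R t c n w}.


Theorem lemma4p1 (R : realType) (v d1 d2 : R * R) (w : R) (under : bool) :
  0 < w -> d1 <> (0, 0) -> d2 <> (0, 0) ->
  0 < fold_angle d1 d2 < pi ->
  (exists P1 P2 : R * R,
      P1 <> P2 /\ fold_intersections v d1 d2 w = [set P1; P2]) /\
  (forall (X Y : layer) (s : bool) (p : R * R),
      knot_piece v d1 d2 X p -> boundary_piece v d1 d2 w Y s p ->
      crossing_sign d1 d2 under X Y = predicted_sign d1 d2 under).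
Proof.
move=> w0 H1 H2 ha.
have c0 := cross_neq0 H1 H2 ha.
have n1 := vnorm_gt0 H1; have n2 := vnorm_gt0 H2.
set c := crossp d1 d2 in c0.
have ca : 0 < `|c| by rewrite normr_gt0.
set t1 := w / 2 * vnorm d2 / `|c|.
set t2 := w / 2 * vnorm d1 / `|c|.
have w2 : 0 < w / 2 by lra.
have t10 : 0 <= t1 by rewrite /t1; apply/ltW/divr_gt0 => //; apply: mulr_gt0.
have t20 : 0 <= t2 by rewrite /t2; apply/ltW/divr_gt0 => //; apply: mulr_gt0.
set P1 := subp v (scalep t1 d1).
set P2 := addp v (scalep t2 d2).
have classify : forall X Y s p, knot_piece v d1 d2 X p -> boundary_piece v d1 d2 w Y s p ->
  (X = Lin /\ Y = Lout /\ p = P1) \/ (X = Lout /\ Y = Lin /\ p = P2).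
  move=> [] [] s p /= [t t0 ->] [/= E _].
  - by move: E; rewrite L3; case: s => E; exfalso; lra.
  - left; split => //; split => //; congr subp; congr scalep.
    by move: E; rewrite L1 => E; exact: (normE (s := s) t0 n2 w0 c0 E).
  - right; split => //; split => //; congr addp; congr scalep.
    by move: E; rewrite L2 => E; exact: (normE (s := s) t0 n1 w0 c0 E).
  - by move: E; rewrite L4; case: s => E; exfalso; lra.
split.
  exists P1, P2; split.
    move=> /(congr1 (fun p => dotp (lnormal d1) (subp p v))).
    rewrite L3 L2 (sgnE (t:=0) n1 w0 c0); case: ifP => _; lra.
  rewrite predeqE => p; split.
    move=> [X [Y [s [K B]]]].
    by case: (classify X Y s p K B) => [[_ [_ ->]]|[_ [_ ->]]]; [left|right].
  case=> ->.
  - exists Lin, Lout, (0 < c); split; first by exists t1.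
    split; last exact: L5.
    by rewrite /= L1 (sgnE (t:=0)).
  - exists Lout, Lin, (0 < c); split; first by exists t2.
    split; last exact: L6.
    by rewrite /= L2 (sgnE (t:=0)).
move=> X Y s p K B.
have hc : crossp d2 d1 = - c by rewrite /c /crossp; ring.
rewrite /predicted_sign /left_fold -/c.
case: (classify X Y s p K B) => [[-> [-> _]]|[-> [-> _]]];
  rewrite /crossing_sign /= -/c; case: under => /=; rewrite ?hc ?sgrN;
  (have [cp|cn|ce] := ltgtP c 0; [rewrite ltr0_sg // ?opprK| rewrite gtr0_sg // |by move: c0; rewrite ce eqxx]).
all: done.
Qed.
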